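(* Let $m\geq 2$ and $n\geq 2$ be integers, let $P_m$ be the path of order $m$ and $K_n$ the complete graph of order $n$. Then $rvcl(P_m\diamond K_n)=\max\{rvc(P_m),\,n+2\}$.
   Context: All graphs are finite, simple, connected and undirected; $d$ denotes graph distance. A rainbow vertex $k$-coloring of $G$ is a map $c:V(G)\to\{1,\dots,k\}$ such that every two vertices are joined by a path whose internal vertices all receive distinct colors; $rvc(G)$ is the least $k$ for which $G$ has one. For such $c$ let $R_i=c^{-1}(i)$; the rainbow code of $v$ is $(d(v,R_1),\dots,d(v,R_k))$ with $d(v,R_i)=\min_{x\in R_i}d(v,x)$. A locating rainbow $k$-coloring is a rainbow vertex $k$-coloring in which distinct vertices have distinct rainbow codes; $rvcl(G)$ is the least $k$ for which one exists. For graphs $G_m$ (order $m$) and $H_n$ (order $n$) on disjoint vertex sets, the edge corona $G_m\diamond H_n$ is obtained from one copy of $G_m$ and $|E(G_m)|$ vertex-disjoint copies of $H_n$, one per edge of $G_m$, by joining both end vertices of the $j$-th edge of $G_m$ to every vertex of the $j$-th copy of $H_n$. *)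

(* Defs.v *)
From mathcomp Require Import all_boot.
Set Implicit Arguments. Unset Strict Implicit. Unset Printing Implicit Defensive.

Section GraphDefs.
Variables (T : finType) (e : rel T).

(* graph distance: least k such that a walk of length k joins u to v
   (for connected graphs this is always < #|T|) *)
Definition dist (u v : T) : nat :=
  find (fun k => [exists p : k.-tuple T, path e u p && (last u p == v)])
       (iota 0 #|T|).

(* d(v, A) = min_{x in A} d(v, x); None encodes d(v, empty set) = infinity *)
Definition setdist (v : T) (A : {set T}) : option nat :=
  if A == set0 then None else Some (\big[minn/#|T|]_(x in A) dist v x).

(* internal vertices of the path u :: p (p ends at the last vertex) *)
Definition internal (p : seq T) : seq T := take (size p).-1 p.

Definition rainbow_path (k : nat) (c : T -> 'I_k) (u v : T) (p : seq T) : bool :=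
  [&& path e u p, last u p == v, uniq (u :: p) & uniq (map c (internal p))].

(* rainbow vertex k-colouring (colours are 0..k-1 instead of 1..k);
   a path without repeated vertices has fewer than #|T| edges *)
Definition rainbow_coloring (k : nat) (c : T -> 'I_k) : bool :=
  [forall u, forall v,
     [exists l : 'I_#|T|, exists p : l.-tuple T, rainbow_path c u v p]].

Definition color_class (k : nat) (c : T -> 'I_k) (i : 'I_k) : {set T} :=
  [set x | c x == i].

Definition rainbow_code (k : nat) (c : T -> 'I_k) (v : T) : {ffun 'I_k -> option nat} :=
  [ffun i => setdist v (color_class c i)].

Definition locating_rainbow_coloring (k : nat) (c : T -> 'I_k) : bool :=
  rainbow_coloring c &&
  [forall u, forall v, (u != v) ==> (rainbow_code c u != rainbow_code c v)].

(* least k admitting such a colouring (an injective colouring with #|T|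
   colours always works for connected graphs, so the search range suffices) *)
Definition rvc : nat :=
  find (fun k => [exists c : {ffun T -> 'I_k}, rainbow_coloring c])
       (iota 0 #|T|.+1).

Definition rvcl : nat :=
  find (fun k => [exists c : {ffun T -> 'I_k}, locating_rainbow_coloring c])
       (iota 0 #|T|.+1).

End GraphDefs.

Definition path_rel (m : nat) : rel 'I_m :=
  fun i j => (i.+1 == j :> nat) || (j.+1 == i :> nat).

Arguments path_rel m : clear implicits.

Definition complete_rel (n : nat) : rel 'I_n := fun x y => x != y.

Arguments complete_rel n : clear implicits.

Section EdgeCorona.
Variables (T U : finType) (e : rel T) (f : rel U).

Definition is_edge (A : {set T}) : bool :=
  [exists x, exists y, e x y && (A == [set x; y])].

Definition edge_t := {A : {set T} | is_edge A}.

(* vertices: those of G, plus one copy of H per edge of G *)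
Definition ecorona_vertex : finType := (T + (edge_t * U))%type.

Definition ecorona_rel : rel ecorona_vertex := fun a b =>
  match a, b with
  | inl x, inl y => e x y
  | inl x, inr (E, _) => x \in val E
  | inr (E, _), inl x => x \in val E
  | inr (E, u), inr (F, w) => (E == F) && f u w
  end.

End EdgeCorona.
Arguments ecorona_vertex [T] U e.
Arguments ecorona_rel [T U] e f _ _.

(* Main.v *)
Require Import Defs.
From mathcomp Require Import all_boot zify.
From Stdlib Require Import FunctionalExtensionality.
Set Implicit Arguments. Unset Strict Implicit. Unset Printing Implicit Defensive.


Lemma bigmin_seq_le (I : eqType) (s : seq I) (P : pred I) (F : I -> nat) N z :
  z \in s -> P z -> \big[minn/N]_(x <- s | P x) F x <= F z.
Proof.
elim: s => [|y s IH] //; rewrite inE big_cons => /orP [/eqP <- -> | zs Pz].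
  exact: geq_minl.
case: (P y); last exact: IH.
by apply: leq_trans (geq_minr _ _) (IH zs Pz).
Qed.

Lemma bigmin_le (I : finType) (A : {pred I}) (F : I -> nat) N z :
  z \in A -> \big[minn/N]_(x in A) F x <= F z.
Proof. by move=> zA; apply: bigmin_seq_le => //; rewrite mem_index_enum. Qed.

Section General.
Variables (T : finType) (e : rel T).

Lemma card_pos (u : T) : 0 < #|T|.
Proof. by apply/card_gt0P; exists u. Qed.

Lemma dist_le_card u v : dist e u v <= #|T|.
Proof. by rewrite /dist; have := find_size  (fun k => [exists p : k.-tuple T, path e u p && (last u p == v)]) (iota 0 #|T|); rewrite size_iota. Qed.

Lemma dist_walk_le u v (p : seq T) :
  size p < #|T| -> path e u p -> last u p = v -> dist e u v <= size p.
Proof.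
move=> hs hp hl; rewrite /dist leqNgt; apply/negP => lt.
have := before_find 0 lt; rewrite nth_iota // add0n => /negbT/negP; apply.
apply/existsP; exists (in_tuple p); by rewrite /= hp hl eqxx.
Qed.


Lemma dist_walk u v : dist e u v < #|T| ->
  exists p : seq T, [/\ size p = dist e u v, path e u p & last u p = v].
Proof.
rewrite /dist; set P := (fun k => _) => lt.
have hh : has P (iota 0 #|T|) by rewrite has_find size_iota.
have := nth_find 0 hh; rewrite nth_iota ?add0n //.
move=> /existsP [p /andP [pp /eqP pl]]; exists p; split=> //; exact: size_tuple.
Qed.

Lemma dist_refl u : dist e u u = 0.
Proof.
apply/eqP; rewrite -leqn0.
by have := @dist_walk_le u u [::] (card_pos u) erefl erefl.
Qed.

Lemma dist_eq0 u v : dist e u v = 0 -> u = v.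
Proof.
move=> h0; have lt : dist e u v < #|T| by rewrite h0 (card_pos u).
have [p [sp _ lp]] := dist_walk lt; move: sp; rewrite h0; case: p lp => //.
Qed.

Lemma dist_step x y z : e x y -> dist e x z <= (dist e y z).+1.
Proof.
move=> exy; case: (ltnP (dist e y z) #|T|) => lt; last first.
  by apply: leq_trans (dist_le_card x z) _; apply: leq_trans lt _.
have [p [sp pp lp]] := dist_walk lt.
case: (ltnP (size (y :: p)) #|T|) => lt2.
  have := @dist_walk_le x z (y :: p) lt2; rewrite /= exy pp lp sp => h; exact: h.
by apply: leq_trans (dist_le_card x z) _; rewrite /= sp in lt2.
Qed.

Lemma walk_h_bound (h : T -> nat) :
  (forall a b, e a b -> h a <= h b + 2) ->
  forall u p, path e u p -> h u <= h (last u p) + 2 * size p.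
Proof.
move=> H u p; elim: p u => [|y p IH] u /=; first by rewrite addn0.
move=> /andP [euy pp]; have := IH y pp; have := H _ _ euy; lia.
Qed.

Lemma walk_h_bound2 (h : T -> nat) :
  (forall a b, e a b -> h a <= h b + 2 /\ h b <= h a + 2) ->
  forall u p, path e u p ->
  h u <= h (last u p) + 2 * size p /\ h (last u p) <= h u + 2 * size p.
Proof.
move=> H u p; elim: p u => [|y p IH] u /=; first by rewrite !addn0.
move=> /andP [euy pp]; have := IH y pp; have := H _ _ euy; lia.
Qed.

Lemma cut_lemma (h : T -> nat) t :
  (forall a b, e a b -> ~~ ((h a < t) && (t < h b))) ->
  forall x p, path e x p -> h x < t -> t < h (last x p) ->
  exists2 z, z \in p & h z = t.
Proof.
move=> H x p; elim: p x => [|y p IH] x /=; first by lia.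
move=> /andP [exy pp] hx hl.
case: (ltngtP (h y) t) => hy.
- have [z zp hz] := IH y pp hy hl; exists z => //; by rewrite inE zp orbT.
- by have := H _ _ exy; rewrite hx hy.
- by exists y; rewrite ?inE ?eqxx.
Qed.

Lemma internal_rcons (s : seq T) z : internal (rcons s z) = s.
Proof. by rewrite /internal size_rcons /= -cats1 take_size_cat. Qed.

Lemma mem_internal x (p : seq T) z : z \in p -> z != last x p -> z \in internal p.
Proof.
case/lastP: p => [|s y] //; rewrite internal_rcons last_rcons mem_rcons inE.
by case/orP => [/eqP -> |]; [rewrite eqxx|].
Qed.

Lemma internal_cons y (p : seq T) : internal (y :: p) = belast y p.
Proof. by rewrite lastI internal_rcons. Qed.


Lemma setdist_in v (A : {set T}) : v \in A -> setdist e v A = Some 0.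
Proof.
move=> vA; rewrite /setdist; case: eqP => [A0|_]; first by move: vA; rewrite A0 inE.
congr Some; apply/eqP; rewrite -leqn0.
by apply: leq_trans (bigmin_le _ _ vA) _; rewrite dist_refl.
Qed.

Lemma setdist_notin v (A : {set T}) : v \notin A -> setdist e v A != Some 0.
Proof.
move=> vA; rewrite /setdist; case: ifP => // _; apply/eqP => [[]] /eqP.
apply/negP; rewrite -lt0n.
apply: (big_ind (fun x => 0 < x)); first exact: card_pos v.
  by move=> a b ha hb; rewrite leq_min ha hb.
move=> z zA; rewrite lt0n; apply/negP => /eqP /dist_eq0 vz.
by move: vA; rewrite vz zA.
Qed.

Lemma setdist_eq v (A : {set T}) d z0 :
  z0 \in A -> dist e v z0 = d -> d <= #|T| ->
  (forall z, z \in A -> d <= dist e v z) -> setdist e v A = Some d.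
Proof.
move=> zA hz hd H; rewrite /setdist; case: eqP => [A0|_]; first by move: zA; rewrite A0 inE.
congr Some; apply/eqP; rewrite eqn_leq; apply/andP; split.
  by rewrite -hz; apply: bigmin_le.
apply: (big_ind (fun x => d <= x)) => //.
by move=> a b ha hb; rewrite leq_min ha hb.
Qed.

Lemma setdist_one v (A : {set T}) z : v \notin A -> z \in A -> e v z ->
  setdist e v A = Some 1.
Proof.
move=> vA zA evz.
have nz : forall z', z' \in A -> 0 < dist e v z'.
  move=> z' zA'; rewrite lt0n; apply/negP => /eqP /dist_eq0 vz.
  by move: vA; rewrite vz zA'.
apply: (@setdist_eq _ _ _ z) => //; last by exact: card_pos v.
apply/eqP; rewrite eqn_leq nz // andbT.
by have := dist_step z evz; rewrite dist_refl.
Qed.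

Lemma twin_dist x y z : (forall a, e a a = false) -> e x y ->
  (forall w, w != x -> w != y -> e x w = e y w) -> z != x -> z != y ->
  dist e x z <= dist e y z.
Proof.
move=> irr exy tw zx zy.
case: (ltnP (dist e y z) #|T|) => lt; last by apply: leq_trans (dist_le_card x z) lt.
have [q [sq pq lq]] := dist_walk lt.
case: q sq pq lq => [|w q] sq; first by move=> _ /= lq; move: zy; rewrite lq eqxx.
move=> /= /andP [eyw pq] lq.
case: (eqVneq w x) => [wx|wx].
  subst w; rewrite -sq; apply: leq_trans (dist_walk_le _ pq lq) _ => //.
  by rewrite -sq /= in lt; apply: ltnW.
have wy : w != y by apply/negP => /eqP wy; move: eyw; rewrite wy irr.
have exw : e x w by rewrite tw.
rewrite -sq; apply: (dist_walk_le (p := w :: q)); by rewrite ?sq //= exw pq.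
Qed.

Hypothesis esym : symmetric e.

Lemma rainbow_rev k (c : T -> 'I_k) u v p :
  rainbow_path e c u v p ->
  size (rev (belast u p)) = size p /\ rainbow_path e c v u (rev (belast u p)).
Proof.
rewrite size_rev size_belast; split=> //.
move: H => /and4P [pp /eqP lp up ip]; subst v.
apply/and4P; split.
- rewrite rev_path; apply: sub_path pp => a b; by rewrite /= esym.
- case: p {pp up ip} => [|y p] //=; by rewrite rev_cons last_rcons.
- by rewrite -rev_rcons -lastI rev_uniq.
- case: p {pp up} ip => [|y p] //=; rewrite rev_cons internal_rcons internal_cons.
  by rewrite map_rev rev_uniq.
Qed.

Lemma rainbow_pack k (c : T -> 'I_k) u v p :
  size p < #|T| -> rainbow_path e c u v p ->
  [exists l : 'I_#|T|, exists q : l.-tuple T, rainbow_path e c u v q].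
Proof.
move=> hs hr; apply/existsP; exists (Ordinal hs); apply/existsP.
by exists (in_tuple p).
Qed.

Lemma rainbow_half k (c : T -> 'I_k) (h : T -> nat) :
  (forall u v, h u <= h v -> exists2 p, size p < #|T| & rainbow_path e c u v p) ->
  rainbow_coloring e c.
Proof.
move=> H; apply/forallP => u; apply/forallP => v.
case: (leqP (h u) (h v)) => huv.
  by have [p hs hr] := H u v huv; exact: rainbow_pack hs hr.
have [p hs hr] := H v u (ltnW huv); have [s1 r1] := rainbow_rev hr.
by apply: (rainbow_pack _ r1); rewrite s1.
Qed.

Lemma twin_code k (c : T -> 'I_k) x y : (forall a, e a a = false) -> e x y ->
  (forall w, w != x -> w != y -> e x w = e y w) -> c x = c y ->
  rainbow_code e c x = rainbow_code e c y.
Proof.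
move=> irr exy tw cxy; apply/ffunP => i; rewrite !ffunE.
case: (eqVneq (c x) i) => [<-|ni].
  by rewrite !setdist_in // inE ?cxy eqxx.
rewrite /setdist; case: ifP => // _; congr Some; apply: eq_bigr => z.
rewrite inE => /eqP hz.
have zx : z != x by apply/negP => /eqP zx; move: ni; rewrite -zx hz eqxx.
have zy : z != y by apply/negP => /eqP zy; move: ni; rewrite cxy -zy hz eqxx.
have eyx : e y x by rewrite esym.
apply/eqP; rewrite eqn_leq twin_dist //= twin_dist // => w wy wx.
by rewrite tw.
Qed.

End General.

Lemma uniq_map_inj (T1 T2 : eqType) (f : T1 -> T2) (s : seq T1) :
  uniq (map f s) -> {in s &, injective f}.
Proof.
elim: s => [|y s IH] //= /andP [ny us] a b; rewrite !inE.
case/orP => [/eqP -> | ha]; case/orP => [/eqP -> | hb] // fe.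
- by move: ny; rewrite fe map_f.
- by move: ny; rewrite -fe map_f.
- exact: IH.
Qed.



Section Corona.
Variables (m' n : nat).
Local Notation m := m'.+2.
Local Notation G := (path_rel m).
Local Notation ET := (edge_t G).
Local Notation V := (ecorona_vertex 'I_n G).
Local Notation eV := (ecorona_rel G (complete_rel n)).

Definition eidx (E : ET) : nat := \big[minn/m]_(x in val E) (x : nat).

Lemma edge_spec (E : ET) : exists i, i.+1 < m /\
  forall x : 'I_m, (x \in val E) = ((x == i :> nat) || (x == i.+1 :> nat)).
Proof.
case: E => A /= /existsP [x /existsP [y /andP [exy /eqP ->]]].
move: exy; rewrite /path_rel => /orP [] /eqP h.
- exists x; split; first by rewrite h ltn_ord.
  by move=> z; rewrite in_set2 h.
- exists y; split; first by rewrite h ltn_ord.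
  by move=> z; rewrite in_set2 h orbC.
Qed.

Lemma eidx_spec (E : ET) : (eidx E).+1 < m /\
  forall x : 'I_m, (x \in val E) = ((x == eidx E :> nat) || (x == (eidx E).+1 :> nat)).
Proof.
have [i [hi hm]] := edge_spec E.
suff -> : eidx E = i by [].
have iE : (Ordinal (ltnW hi)) \in val E by rewrite hm eqxx.
apply/eqP; rewrite eqn_leq; apply/andP; split.
  by rewrite /eidx; apply: (bigmin_le _ _ iE).
rewrite /eidx; apply: (big_ind (fun v => i <= v)).
- lia.
- by move=> a b ha hb; rewrite leq_min ha hb.
- move=> z; rewrite hm => /orP [] /eqP ->; lia.
Qed.

Lemma eidx_lt (E : ET) : (eidx E).+1 < m.
Proof. by case: (eidx_spec E). Qed.

Lemma eidx_mem (E : ET) (x : 'I_m) :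
  (x \in val E) = ((x == eidx E :> nat) || (x == (eidx E).+1 :> nat)).
Proof. by case: (eidx_spec E) => _ ->. Qed.

Lemma eidx_inj (E F : ET) : eidx E = eidx F -> E = F.
Proof.
move=> h; apply: val_inj; apply/setP => x; by rewrite !eidx_mem h.
Qed.

Definition pv (j : nat) : V := inl (inord j).

Lemma pvK (j : nat) : j < m -> pv j = inl (inord j) /\ (inord j : 'I_m) = j :> nat.
Proof. by move=> hj; rewrite inordK. Qed.

Lemma pv_val (x : 'I_m) : pv x = inl x.
Proof. by rewrite /pv inord_val. Qed.

Lemma pv_inj j j' : j < m -> j' < m -> pv j = pv j' -> j = j'.
Proof.
move=> hj hj' [] h; have := congr1 val h; rewrite /= !inordK //.
Qed.

Definition h (a : V) : nat :=
  match a with inl j => 2 * j | inr (E, _) => (2 * eidx E).+1 end.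

Lemma e_ll (x y : 'I_m) : eV (inl x) (inl y) = (x.+1 == y :> nat) || (y.+1 == x :> nat).
Proof. by []. Qed.

Lemma e_lr (x : 'I_m) E u : eV (inl x) (inr (E, u)) = (x == eidx E :> nat) || (x == (eidx E).+1 :> nat).
Proof. by rewrite /= eidx_mem. Qed.

Lemma e_rl (x : 'I_m) E u : eV (inr (E, u)) (inl x) = (x == eidx E :> nat) || (x == (eidx E).+1 :> nat).
Proof. by rewrite /= eidx_mem. Qed.

Lemma e_rr E F u w : eV (inr (E, u)) (inr (F, w)) = (E == F) && (u != w).
Proof. by []. Qed.

Lemma eV_sym : symmetric eV.
Proof.
case=> [x|[E u]] [y|[F w]] //=.
- by rewrite /path_rel orbC.
- by rewrite /complete_rel eq_sym [w == u]eq_sym.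
Qed.

Lemma eV_irr a : eV a a = false.
Proof.
case: a => [x|[E u]] /=; first by rewrite /path_rel; apply/negbTE; lia.
by rewrite /complete_rel !eqxx.
Qed.

Lemma h_step a b : eV a b -> h a <= h b + 2 /\ h b <= h a + 2.
Proof.
case: a => [x|[E u]]; case: b => [y|[F w]].
- rewrite e_ll /=; lia.
- rewrite e_lr /=; lia.
- rewrite e_rl /=; lia.
- by rewrite e_rr /= => /andP [/eqP -> _]; lia.
Qed.

Lemma h_cut a b j : eV a b -> ~~ ((h a < 2 * j) && (2 * j < h b)).
Proof.
case: a => [x|[E u]]; case: b => [y|[F w]].
- rewrite e_ll /=; lia.
- rewrite e_lr /=; lia.
- rewrite e_rl /=; lia.
- by rewrite e_rr /= => /andP [/eqP -> _]; lia.
Qed.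

Lemma walk_h2 u p : path eV u p ->
  h u <= h (last u p) + 2 * size p /\ h (last u p) <= h u + 2 * size p.
Proof.
exact: (walk_h_bound2 h_step).
Qed.

Lemma cardV : m + n <= #|V|.
Proof.
rewrite card_sum card_ord leq_add2l.
have E0 : is_edge G [set (inord 0 : 'I_m); inord 1].
  apply/existsP; exists (inord 0); apply/existsP; exists (inord 1).
  by rewrite eqxx andbT /path_rel !inordK.
pose E : ET := exist (fun A => is_edge G A) _ E0.
have inj : injective (fun u : 'I_n => (E, u)) by move=> u v [].
by have := @leq_card _ _ _ inj; rewrite card_ord.
Qed.

(* distance to a path vertex *)
Definition DP (k : nat) (a : V) : nat :=
  match a with
  | inl j => (j - k) + (k - j)
  | inr (E, _) => maxn 1 ((k - eidx E) + ((eidx E).+1 - k))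
  end.

Lemma DP_le k a : k < m -> DP k a <= m.
Proof. case: a => [x|[E u]] /= hk; [have := ltn_ord x | have := eidx_lt E]; lia. Qed.

Lemma dist_pv_lower k a : k < m -> DP k a <= dist eV a (pv k).
Proof.
move=> hk; case: (ltnP (dist eV a (pv k)) #|V|) => lt; last first.
  apply: leq_trans lt; apply: leq_trans (DP_le a hk) _; have := cardV; lia.
have [p [sp pp lp]] := dist_walk lt.
have := walk_h2 pp; rewrite lp sp /pv /= inordK //.
case: a {pp lp sp lt} => [x|[E u]] /=; lia.
Qed.

Lemma nb_pv (E : ET) u j : j < m -> (j == eidx E) || (j == (eidx E).+1) ->
  eV (inr (E, u)) (pv j).
Proof. by move=> hj hh; rewrite /pv e_rl inordK. Qed.

Lemma pv_pv j j' : j < m -> j' < m -> (j.+1 == j') || (j'.+1 == j) -> eV (pv j) (pv j').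
Proof. by move=> hj hj' hh; rewrite /pv e_ll !inordK. Qed.

Lemma dist_pv_upper k a : k < m -> dist eV a (pv k) <= DP k a.
Proof.
move=> hk.
suff H : forall d a, DP k a <= d -> dist eV a (pv k) <= DP k a by apply: H (leqnn _).
elim=> [|d IH] {}a.
  rewrite leqn0 => /eqP h0; case: a h0 => [x|[E u]] /= h0; last by lia.
  have -> : x = inord k by apply: val_inj; rewrite /= inordK //; lia.
  by rewrite dist_refl.
move=> hd; case: a hd => [x|[E u]] hd.
- have hx := ltn_ord x.
  case: (ltngtP x k) => hxk.
  + have e1 : eV (inl x) (pv x.+1) by rewrite -pv_val; apply: pv_pv; lia.
    apply: leq_trans (dist_step _ e1) _.
    apply: (@leq_trans (DP k (pv x.+1)).+1).
      rewrite ltnS; apply: IH; move: hd; rewrite /pv /= inordK; lia.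
    move: hd; rewrite /pv /= inordK; lia.
  + have e1 : eV (inl x) (pv x.-1) by rewrite -pv_val; apply: pv_pv; lia.
    apply: leq_trans (dist_step _ e1) _.
    apply: (@leq_trans (DP k (pv x.-1)).+1).
      rewrite ltnS; apply: IH; move: hd; rewrite /pv /= inordK; lia.
    move: hd; rewrite /pv /= inordK; lia.
  + have -> : x = inord k by apply: val_inj; rewrite /= inordK //; lia.
    by rewrite dist_refl.
- have hi := eidx_lt E.
  case: (leqP k (eidx E)) => hki.
  + have e1 : eV (inr (E, u)) (pv (eidx E)) by apply: nb_pv; [lia| rewrite eqxx].
    apply: leq_trans (dist_step _ e1) _.
    apply: (@leq_trans (DP k (pv (eidx E))).+1).
      rewrite ltnS; apply: IH; move: hd; rewrite /pv /= inordK; lia.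
    move: hd; rewrite /pv /= inordK; lia.
  + have e1 : eV (inr (E, u)) (pv (eidx E).+1) by apply: nb_pv; [lia| rewrite eqxx orbT].
    apply: leq_trans (dist_step _ e1) _.
    apply: (@leq_trans (DP k (pv (eidx E).+1)).+1).
      rewrite ltnS; apply: IH; move: hd; rewrite /pv /= inordK; lia.
    move: hd; rewrite /pv /= inordK; lia.
Qed.

Lemma dist_pv k a : k < m -> dist eV a (pv k) = DP k a.
Proof. by move=> hk; apply/eqP; rewrite eqn_leq dist_pv_upper ?dist_pv_lower. Qed.

End Corona.


Section Corona3.
Variables (m' n : nat).
Local Notation m := m'.+2.
Local Notation G := (path_rel m).
Local Notation ET := (edge_t G).
Local Notation V := (ecorona_vertex 'I_n G).
Local Notation eV := (ecorona_rel G (complete_rel n)).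
Local Notation pv := (@pv m' n).
Local Notation h := (@h m' n).

Definition Sint lo hi : {set V} :=
  [set a : V | if a is inl j then (lo <= j) && (j <= hi) else false].

Definition Gint lo hi (a : V) : nat :=
  match a with
  | inl j => (lo - j) + (j - hi)
  | inr (E, _) => maxn 1 ((lo - eidx E) + ((eidx E).+1 - hi))
  end.

Definition clamp lo hi (a : V) : nat :=
  match a with
  | inl j => if j < lo then lo else if hi < j then hi else j
  | inr (E, _) => if eidx E < lo then lo else if hi <= eidx E then hi else eidx E
  end.

Lemma setdist_int lo hi a : lo <= hi -> hi < m ->
  setdist eV a (Sint lo hi) = Some (Gint lo hi a).
Proof.
move=> hlo hhi.
have hc : lo <= clamp lo hi a <= hi.
  case: a => [x|[E u]] /=; (case: ifP => h1; [|case: ifP => h2]); lia.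
apply: (@setdist_eq _ _ _ _ _ (pv (clamp lo hi a))).
- rewrite inE /pv inordK //; lia.
- rewrite dist_pv; last lia.
  case: a hc => [x|[E u]] /=; (case: ifP => h1; [|case: ifP => h2]); lia.
- apply: leq_trans (cardV m' n); case: a {hc} => [x|[E u]] /=;
   [have := ltn_ord x | have := eidx_lt E]; lia.
- move=> [z|[F w]]; rewrite inE //= => hz; rewrite -pv_val dist_pv //.
  case: a {hc} => [x|[E u]] /=; lia.
Qed.


Lemma path_pvs a len : a + len < m ->
  path eV (pv a) (map pv (iota a.+1 len)) /\ last (pv a) (map pv (iota a.+1 len)) = pv (a + len).
Proof.
elim: len a => [|len IH] a hl; first by rewrite addn0.
have [|p1 l1] := IH a.+1; first lia.
split; last by rewrite /= l1 addSnnS.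
apply/andP; split=> //; apply: pv_pv; lia.
Qed.

Lemma mem_pvs z a len : z \in map pv (iota a len) -> exists2 j, a <= j < a + len & z = pv j.
Proof. by case/mapP => j; rewrite mem_iota => hj ->; exists j. Qed.

Lemma pv_eq_inl j (x : 'I_m) : j < m -> pv j = inl x -> j = x.
Proof. by move=> hj [] <-; rewrite inordK. Qed.

Definition ra (a : V) : nat := match a with inl j => j.+1 | inr (E, _) => (eidx E).+1 end.
Definition lb (a : V) : nat := match a with inl j => j.-1 | inr (E, _) => eidx E end.

Lemma gen_bounds u v : u != v -> ~~ eV u v -> h u <= h v ->
  0 < ra u <= lb v /\ lb v < m.-1.
Proof.
case: u => [x|[E w]]; case: v => [y|[F w']] neq ne.
- rewrite e_ll in ne.
  have : x != y :> nat by apply: contra neq => /eqP hxy; apply/eqP; congr inl; exact: val_inj.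
  rewrite /=; have := ltn_ord y; lia.
- rewrite e_lr in ne; rewrite /=; have := eidx_lt F; lia.
- rewrite e_rl in ne; rewrite /=; have := ltn_ord y; lia.
- rewrite e_rr in ne.
  have : eidx E != eidx F.
    apply/negP => /eqP /eidx_inj hEF; subst F; move: ne neq; rewrite eqxx /=.
    by move/negbNE/eqP => ->; rewrite eqxx.
  rewrite /=; have := eidx_lt F; lia.
Qed.

Lemma ra_notin u len : ra u + len <= m -> u \notin map pv (iota (ra u) len).
Proof.
move=> hl; apply/negP => /mem_pvs [j hj hu].
case: u hu hj hl => [x|[E w]] hu //= hj hl.
have jm : j < m by lia.
have := pv_eq_inl jm (esym hu); lia.
Qed.

Lemma lb_notin v a len : a + len <= (lb v).+1 -> a + len <= m -> 0 < a ->
  v \notin map pv (iota a len).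
Proof.
move=> hl hm ha; apply/negP => /mem_pvs [j hj hv].
case: v hv hj hl => [y|[F w]] hv //= hj hl.
have jm : j < m by lia.
have := pv_eq_inl jm (esym hv); lia.
Qed.

Section Coloring.
Variable K' : nat.
Hypothesis hK1 : n + 2 <= K'.+1.
Hypothesis hK2 : m' <= K'.+1.

Definition t0 : nat := if 1 < m' then 1 else 0.
Definition s1 : nat := maxn 1 m'.

Lemma t0s1 : (t0 = 1 /\ s1 = m' /\ 1 < m') \/ (t0 = 0 /\ s1 = 1 /\ m' <= 1).
Proof. rewrite /t0 /s1; case: ifP => h1; [left|right]; lia. Qed.

Definition raw (a : V) : nat :=
  match a with
  | inl j => if j <= t0 then 0 else if s1 <= j then 1 else j
  | inr (_, u) => u + 2
  end.

Lemma raw_lt a : raw a < K'.+1.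
Proof.
have := t0s1; case: a => [x|[E u]] /=; last by have := ltn_ord u; lia.
have := ltn_ord x; case: ifP => h1; [|case: ifP => h2]; lia.
Qed.

Definition col (a : V) : 'I_K'.+1 := inord (raw a).

Lemma col_eq a b : (col a == col b) = (raw a == raw b).
Proof.
apply/eqP/eqP => [hh|hh]; last by rewrite /col hh.
by move: hh => /(congr1 val); rewrite /= !inordK //; exact: raw_lt.
Qed.

Lemma class0 : color_class col (inord 0) = Sint 0 t0.
Proof.
apply/setP => a; rewrite !inE.
have -> : (col a == inord 0) = (raw a == 0).
  apply/eqP/eqP => [hh|hh]; last by rewrite /col hh.
  by move: hh => /(congr1 val); rewrite /= !inordK //; exact: raw_lt.
have := t0s1; case: a => [x|[E u]] /=; last by lia.
case: ifP => h1; [|case: ifP => h2]; lia.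
Qed.

Lemma class1 : color_class col (inord 1) = Sint s1 m.-1.
Proof.
apply/setP => a; rewrite !inE.
have -> : (col a == inord 1) = (raw a == 1).
  apply/eqP/eqP => [hh|hh]; last by rewrite /col hh.
  by move: hh => /(congr1 val); rewrite /= !inordK //; try exact: raw_lt; lia.
have := t0s1; case: a => [x|[E u]] /=; last by lia.
have := ltn_ord x; case: ifP => h1; [|case: ifP => h2]; lia.
Qed.

Lemma raw_inner j j' : 0 < j < m.-1 -> 0 < j' < m.-1 -> raw (pv j) = raw (pv j') -> j = j'.
Proof.
move=> hj hj'; rewrite /pv /= !inordK; try lia.
have := t0s1; case: ifP => h1; [|case: ifP => h2]; case: ifP => h3; try case: ifP => h4; lia.
Qed.


Lemma col_rainbow : rainbow_coloring eV col.
Proof.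
have cV := cardV m' n.
apply: (@rainbow_half _ _ (@eV_sym m' n) _ _ h) => u v huv.
case: (eqVneq u v) => [<-|neq].
  exists [::]; first exact: card_pos u.
  by rewrite /rainbow_path /= eqxx.
case: (boolP (eV u v)) => [euv|ne].
  exists [:: v]; first by apply: leq_trans _ cV; rewrite /=; lia.
  by rewrite /rainbow_path /= euv eqxx /= inE neq.
have [hb1 hb2] := gen_bounds neq ne huv.
set a := ra u; set b := lb v.
have hs : map pv (iota a (b.+1 - a)) = pv a :: map pv (iota a.+1 (b - a)).
  by have -> : b.+1 - a = (b - a).+1 by lia.
set s := map pv (iota a (b.+1 - a)).
have [|p1 l1] := @path_pvs a (b - a); first by lia.
have eua : eV u (pv a).
  rewrite /a; move: hb1 hb2; case: u {huv neq ne a s hs p1 l1} => [x|[E w]];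
    rewrite [ra _]/= => hb1 hb2.
    by rewrite -pv_val; apply: pv_pv; have := ltn_ord x; lia.
  by apply: nb_pv; [have := eidx_lt E; lia | rewrite eqxx orbT].
have ebv : eV (pv b) v.
  rewrite /b; move: hb1 hb2; case: v {huv neq ne a b s hs p1 l1 eua} => [y|[F w]];
    rewrite [lb _]/= => hb1 hb2.
    by rewrite -pv_val; apply: pv_pv; have := ltn_ord y; lia.
  by rewrite eV_sym; apply: nb_pv; [have := eidx_lt F; lia | rewrite eqxx].
have nus : u \notin s by apply: ra_notin; lia.
have nvs : v \notin s by apply: lb_notin; lia.
have us : uniq s.
  rewrite map_inj_in_uniq ?iota_uniq // => j j'; rewrite !mem_iota => hj hj'.
  by apply: pv_inj; lia.
exists (rcons s v).
  by rewrite size_rcons size_map size_iota; apply: leq_trans _ cV; lia.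
apply/and4P; split.
- rewrite rcons_path /s hs; apply/andP; split; first by apply/andP; split.
  by rewrite [last _ _]/= l1 (_ : a + (b - a) = b) //; lia.
- by rewrite last_rcons.
- by rewrite /= rcons_uniq mem_rcons inE negb_or neq nus nvs us.
- rewrite internal_rcons -map_comp map_inj_in_uniq ?iota_uniq // => j j'.
  rewrite !mem_iota => hj hj' /= /eqP; rewrite col_eq => /eqP; apply: raw_inner; lia.
Qed.

Lemma col_locating : locating_rainbow_coloring eV col.
Proof.
rewrite /locating_rainbow_coloring col_rainbow /=.
apply/forallP => u; apply/forallP => v; apply/implyP => neq.
apply/negP => /eqP hc.
have key i : setdist eV u (color_class col i) = setdist eV v (color_class col i).
  by have := congr1 (fun f : {ffun 'I_K'.+1 -> option nat} => f i) hc; rewrite !ffunE.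
case: (eqVneq (raw u) (raw v)) => hr; last first.
  have := key (col u); rewrite setdist_in ?inE ?eqxx // => /esym /eqP.
  by apply/negP; apply: setdist_notin; rewrite inE col_eq eq_sym.
have ht := t0s1.
have k0 := key (inord 0); rewrite class0 !setdist_int in k0; try lia.
have k1 := key (inord 1); rewrite class1 !setdist_int in k1; try lia.
case: k0 k1 => k0 [] k1.
clear key hc.
case: u v neq hr k0 k1 => [x|[E w]] [y|[F w']] neq /= hr k0 k1.
- have : x != y :> nat by apply: contra neq => /eqP hxy; apply/eqP; congr inl; exact: val_inj.
  have := ltn_ord x; have := ltn_ord y.
  move: hr; case: ifP => h1; [|case: ifP => h2]; case: ifP => h3; try case: ifP => h4; lia.
- have := ltn_ord x; have := eidx_lt F.
  move: hr; case: ifP => h1; [|case: ifP => h2]; lia.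
- have := ltn_ord y; have := eidx_lt E.
  move: hr; case: ifP => h1; [|case: ifP => h2]; lia.
- have ww : w = w' by apply: ord_inj; lia.
  subst w'; have : eidx E != eidx F.
    by apply: contra neq => /eqP /eidx_inj ->.
  have := eidx_lt E; have := eidx_lt F; lia.
Qed.

End Coloring.

End Corona3.


Section Lower.
Variables (m' n : nat).
Local Notation m := m'.+2.
Local Notation G := (path_rel m).
Local Notation ET := (edge_t G).
Local Notation V := (ecorona_vertex 'I_n G).
Local Notation eV := (ecorona_rel G (complete_rel n)).
Local Notation pv := (@pv m' n).
Local Notation h := (@h m' n).

Lemma G_sym : symmetric G.
Proof. by move=> x y; rewrite /path_rel orbC. Qed.

Lemma get_path (T : finType) (e : rel T) k (c : T -> 'I_k) u v : rainbow_coloring e c ->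
  exists p, rainbow_path e c u v p.
Proof.
move/forallP/(_ u)/forallP/(_ v)/existsP => [l /existsP [p hp]]; by exists p.
Qed.

Lemma rvc_path_lower k (c : 'I_m -> 'I_k) : rainbow_coloring G c -> m' <= k.
Proof.
move=> /(get_path ord0 ord_max) [p /and4P [pp /eqP lp up ip]].
have inner j : 0 < j < m.-1 -> (inord j : 'I_m) \in internal p.
  move=> hj.
  have [|||z zp hz] := @cut_lemma _ G (fun x : 'I_m => x : nat) j _ ord0 p pp.
  - by move=> a b; rewrite /path_rel; lia.
  - by rewrite /=; lia.
  - by rewrite lp /=; lia.
  have -> : inord j = z by apply: val_inj; rewrite /= inordK //; lia.
  by apply: (mem_internal (x := ord0)) zp _; rewrite lp; apply/negP => /eqP hz2; move: hz; rewrite hz2 /=; lia.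
have inj : injective (fun i : 'I_m' => c (inord i.+1)).
  move=> i i' /= hc.
  have hi : 0 < i.+1 < m.-1 by have := ltn_ord i; lia.
  have hi' : 0 < i'.+1 < m.-1 by have := ltn_ord i'; lia.
  have := uniq_map_inj ip (inner _ hi) (inner _ hi') hc.
  move=> /(congr1 (@nat_of_ord _)) /=; rewrite !inordK; try lia.
  by move=> hh; apply: ord_inj; lia.
by have := @leq_card _ _ _ inj; rewrite !card_ord.
Qed.

Lemma path_ords a len : a + len < m ->
  path G (inord a) (map inord (iota a.+1 len)) /\
  last (inord a) (map inord (iota a.+1 len)) = inord (a + len) :> 'I_m.
Proof.
elim: len a => [|len IH] a hl; first by rewrite addn0.
have [|p1 l1] := IH a.+1; first lia.
split; last by rewrite /= l1 addSnnS.
apply/andP; split=> //; rewrite /path_rel !inordK; lia.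
Qed.

Lemma pv_internal (u v : 'I_m) q j : path eV (inl u) q -> last (inl u) q = inl v ->
  u < j < v -> pv j \in internal q.
Proof.
move=> pq lq hj.
have [||z zq hz] := @cut_lemma _ eV h (2 * j) (fun a b => @h_cut m' n a b j) _ q pq.
- by rewrite /=; lia.
- by rewrite lq /=; lia.
have -> : pv j = z.
  case: z zq hz => [x|[E w]] zq /= hz; last by lia.
  by rewrite /pv; congr inl; apply: ord_inj; rewrite inordK; have := ltn_ord v; lia.
apply: (mem_internal (x := inl u)) zq _; rewrite lq.
apply/negP => /eqP hz2; move: hz; rewrite hz2 /=; lia.
Qed.

Lemma restrict_rainbow k (c : V -> 'I_k) :
  rainbow_coloring eV c -> rainbow_coloring G (fun x => c (inl x)).
Proof.
move=> rc; apply: (@rainbow_half _ _ G_sym _ _ (fun x : 'I_m => x : nat)) => u v huv.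
case: (eqVneq u v) => [<-|neq].
  exists [::]; first exact: card_pos u.
  by rewrite /rainbow_path /= eqxx.
have ltuv : u < v.
  by move: neq huv; rewrite -(inj_eq val_inj) /=; lia.
set len := v - u - 1.
set s := map inord (iota u.+1 len) : seq 'I_m.
have [|p1 l1] := @path_ords u len; first by have := ltn_ord v; lia.
rewrite inord_val in p1 l1.
exists (rcons s v).
  by rewrite size_rcons size_map size_iota card_ord; have := ltn_ord v; lia.
have nus : u \notin s.
  apply/negP => /mapP [j]; rewrite mem_iota => hj /(congr1 (@nat_of_ord _)) /=.
  rewrite inordK; have := ltn_ord v; lia.
have nvs : v \notin s.
  apply/negP => /mapP [j]; rewrite mem_iota => hj /(congr1 (@nat_of_ord _)) /=.
  rewrite inordK; have := ltn_ord v; lia.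
have us : uniq s.
  rewrite map_inj_in_uniq ?iota_uniq // => j j'; rewrite !mem_iota => hj hj'.
  move/(congr1 (@nat_of_ord _)) => /=; rewrite !inordK //; have := ltn_ord v; lia.
apply/and4P; split.
- rewrite rcons_path p1 /= l1 /path_rel inordK; have := ltn_ord v; lia.
- by rewrite last_rcons.
- by rewrite /= rcons_uniq mem_rcons inE negb_or neq nus nvs us.
- rewrite internal_rcons -map_comp map_inj_in_uniq ?iota_uniq // => j j'.
  rewrite !mem_iota => hj hj' /= hc.
  have [q /and4P [pq /eqP lq uq iq]] := get_path (inl u) (inl v) rc.
  have hj1 : u < j < v by lia.
  have hj2 : u < j' < v by lia.
  have := uniq_map_inj iq (pv_internal pq lq hj1) (pv_internal pq lq hj2) hc.
  rewrite /pv => [[]] /(congr1 (@nat_of_ord _)) /=; rewrite !inordK //; have := ltn_ord v; lia.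
Qed.

Lemma E0_edge : is_edge G [set (inord 0 : 'I_m); inord 1].
Proof.
apply/existsP; exists (inord 0); apply/existsP; exists (inord 1).
by rewrite eqxx andbT /path_rel !inordK.
Qed.

Definition E0 : ET := exist (fun A => is_edge G A) _ E0_edge.

Lemma eidx_E0 : eidx E0 = 0.
Proof.
have := eidx_mem E0 (inord 0); rewrite /E0 /= in_set2 eqxx /= inordK // => hh.
lia.
Qed.

Definition g (a : option 'I_n) : V := if a is Some u then inr (E0, u) else pv 0.

Lemma gS u : g (Some u) = inr (E0, u). Proof. by []. Qed.
Lemma gN : g None = pv 0. Proof. by []. Qed.

Lemma g_inj : injective g.
Proof. by case=> [u|] [w|] //= [] ->. Qed.

Lemma g_adj a b : a != b -> eV (g a) (g b).
Proof.
case: a => [u|]; case: b => [w|] // hab; rewrite ?gS ?gN.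
- by rewrite e_rr eqxx.
- by rewrite /pv e_rl inordK ?eidx_E0.
- by rewrite /pv e_lr inordK ?eidx_E0.
Qed.

Lemma g_out a w : (forall b, w != g b) -> eV (g a) w = (w == pv 1).
Proof.
move=> hw; case: w hw => [x|[F w']] hw.
- have x0 : x != 0 :> nat.
    apply/negP => /eqP x0; have := hw None; rewrite gN /pv.
    have -> : x = inord 0 by apply: ord_inj; rewrite inordK.
    by rewrite eqxx.

  have -> : (inl x == pv 1) = (x == 1 :> nat).
    rewrite /pv; apply/eqP/eqP => [[] ->|hx]; first by rewrite inordK.
    by congr inl; apply: ord_inj; rewrite inordK.
  case: a => [u|]; rewrite ?gS ?gN.
  + rewrite e_rl eidx_E0; lia.
  + rewrite /pv e_ll inordK //; lia.
- have FE : F != E0 by apply/negP => /eqP FE; have := hw (Some w'); rewrite FE eqxx.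
  have : eidx F != 0 by apply: contra FE; rewrite -eidx_E0 => /eqP /eidx_inj ->.
  case: a => [u|] hF; rewrite ?gS ?gN.
  + by rewrite e_rr eq_sym (negbTE FE).
  + rewrite /pv e_lr inordK //; apply/negbTE; lia.
Qed.

Lemma g_twin a b : a != b -> forall w, w != g a -> w != g b -> eV (g a) w = eV (g b) w.
Proof.
move=> ab w wa wb.
case: (pickP (fun b' => w == g b')) => [b' /eqP hb | hn]; last first.
  by rewrite !g_out // => b'; rewrite hn.
subst w; rewrite !g_adj //;
  first [ by apply: contra wa => /eqP -> | by apply: contra wb => /eqP -> ].
Qed.

Lemma pv1_out b : pv 1 != g b.
Proof.
case: b => [u|] //=; rewrite /pv; apply/negP => /eqP [] /(congr1 (@nat_of_ord _)).
by rewrite !inordK.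
Qed.

Lemma locating_lower k (c : V -> 'I_k) : locating_rainbow_coloring eV c -> n + 2 <= k.
Proof.
move=> /andP [rc /forallP loc].
have dc x y : x != y -> rainbow_code eV c x != rainbow_code eV c y.
  by move=> xy; have /forallP /(_ y) /implyP := loc x; apply.
have inj : injective (fun a => c (g a)).
  move=> a b hab; apply/eqP; apply/negPn/negP => nab.
  have := dc (g a) (g b); rewrite (inj_eq g_inj) nab => /(_ isT).
  by rewrite (twin_code (@eV_sym m' n) (@eV_irr m' n) (g_adj nab) (g_twin nab) hab) eqxx.
have hk : n.+1 <= k by have := @leq_card _ _ _ inj; rewrite card_option !card_ord.
rewrite leqNgt; apply/negP => hlt.
have onto := @inj_card_onto _ _ _ inj.
have {}onto i : exists b, c (g b) = i.
  have /codomP [b ->] : i \in codom (fun a => c (g a)).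
    by apply: onto; rewrite card_option !card_ord; lia.
  by exists b.
have [a0 ha0] := onto (c (pv 1)).
have := dc (pv 1) (g a0) (pv1_out a0); apply/negP; rewrite negbK; apply/eqP.
apply/ffunP => i; rewrite !ffunE.
case: (eqVneq (c (pv 1)) i) => [<-|ni].
  by rewrite !setdist_in // inE ?ha0 eqxx.
have [b hb] := onto i.
have ba0 : a0 != b by apply/negP => /eqP ab; move: ni; rewrite -hb -ab ha0 eqxx.
rewrite (@setdist_one _ _ _ _ (g b)); first last.
- by rewrite eV_sym g_out ?eqxx // => b'; exact: pv1_out.
- by rewrite inE hb.
- by rewrite inE.
rewrite (@setdist_one _ _ _ _ (g b)) //.
- by rewrite inE ha0.
- by rewrite inE hb.
- exact: g_adj.
Qed.

End Lower.


Lemma find_iota_eq (P : pred nat) K N :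
  P K -> (forall k, k < K -> ~~ P k) -> K < N -> find P (iota 0 N) = K.
Proof.
move=> PK H KN; apply/eqP; rewrite eqn_leq; apply/andP; split.
  rewrite leqNgt; apply/negP => lt; have := before_find 0 lt.
  by rewrite nth_iota // add0n PK.
rewrite leqNgt; apply/negP => lt.
have hh : has P (iota 0 N) by rewrite has_find size_iota; lia.
have := nth_find 0 hh; rewrite nth_iota; last lia.
by rewrite add0n; apply/negP; apply: H.
Qed.

Lemma ffun_fun (T : finType) (R : Type) (f : T -> R) : fun_of_fin (finfun f) = f.
Proof. by apply: functional_extensionality => x; rewrite ffunE. Qed.

Theorem theorem5 (m n : nat) (hm : 2 <= m) (hn : 2 <= n) :
  rvcl (ecorona_rel (path_rel m) (complete_rel n))
  = maxn (rvc (path_rel m)) (n + 2).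
Proof.
case: m hm => [|[|m']] // hm.
set r := rvc (path_rel m'.+2).
have rle : r <= m'.+3.
  by rewrite /r /rvc; have := find_size (fun k => [exists c : {ffun 'I_m'.+2 -> 'I_k}, rainbow_coloring (path_rel m'.+2) c]) (iota 0 #|'I_m'.+2|.+1); rewrite size_iota card_ord.
have rlow : m' <= r.
  rewrite /r /rvc; set P := (fun k => _).
  case: (ltnP (find P (iota 0 #|'I_m'.+2|.+1)) (size (iota 0 #|'I_m'.+2|.+1))) => lt; last first.
    by apply: leq_trans lt; rewrite size_iota card_ord; lia.
  have := nth_find 0 (eq_ind_r _ lt (has_find P _)).
  rewrite nth_iota; last by move: lt; rewrite size_iota.
  by rewrite add0n => /existsP [c rc]; exact: rvc_path_lower rc.
have hK1 : n + 2 <= maxn r (n + 2) by apply: leq_maxr.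
have hK2 : m' <= maxn r (n + 2) by apply: leq_trans rlow (leq_maxl _ _).
rewrite /rvcl; apply: find_iota_eq.
- move: hK1 hK2; case: (maxn r (n + 2)) => [|K'] hK1 hK2; first by lia.
  apply/existsP; exists (finfun (@col m' n K')); rewrite ffun_fun.
  exact: col_locating.
- move=> k hk; apply/negP => /existsP [c lc].
  have l1 := locating_lower lc.
  have rc := restrict_rainbow (proj1 (andP lc)).
  have : r <= k.
    rewrite leqNgt; apply/negP => lt.
    have hP : [exists c0 : {ffun 'I_m'.+2 -> 'I_k}, rainbow_coloring (path_rel m'.+2) c0].
      by apply/existsP; exists (finfun (fun x => c (inl x))); rewrite ffun_fun.
    have := before_find 0 lt; rewrite nth_iota; last by move: rle lt; rewrite card_ord; lia.
    by rewrite add0n /= hP.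
  move: hk l1; lia.
- rewrite ltnS geq_max; apply/andP; split; apply: leq_trans (cardV m' n); lia.
Qed.
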